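(* Let $\Gamma$ be a mandarin graph with $N$ edges and let $\mathbf{z}\in\Sigma(\Gamma)$. Define $\mathcal{T}_{\mathbf{z},\mathrm{s}}(\Gamma)=\{\mathbf{x}\in\mathcal{T}_{\mathbf{z}}(\Gamma):(A_j,B_j)=(C_j,D_j)\text{ for all }j\}$ and $\mathcal{T}_{\mathbf{z},\mathrm{as}}(\Gamma)=\{\mathbf{x}\in\mathcal{T}_{\mathbf{z}}(\Gamma):(A_j,B_j)=-(C_j,D_j)\text{ for all }j\}$. Then $\mathcal{T}_{\mathbf{z}}(\Gamma)=\mathcal{T}_{\mathbf{z},\mathrm{s}}(\Gamma)\oplus\mathcal{T}_{\mathbf{z},\mathrm{as}}(\Gamma)$, and $\mathcal{T}_{\mathbf{z},\mathrm{s}}(\Gamma)\ne\{0\}\iff P_{M,\mathrm{s}}(\mathbf{z})=0$, $\mathcal{T}_{\mathbf{z},\mathrm{as}}(\Gamma)\ne\{0\}\iff P_{M,\mathrm{as}}(\mathbf{z})=0$, where $P_{M,\mathrm{s}}(\mathbf{z})=\sum_{j=1}^N(z_j-1)\prod_{i\ne j}(z_i+1)$ and $P_{M,\mathrm{as}}(\mathbf{z})=\sum_{j=1}^N(z_j+1)\prod_{i\ne j}(z_i-1)$.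
   Context: A mandarin graph has exactly two vertices and $N$ edges $e_1,\dots,e_N$ each joining them; each edge is oriented. For $\boldsymbol{\ell}\in\mathbb{R}_+^N$, $(\Gamma,\boldsymbol{\ell})$ has $e_j\cong[0,\ell_j]$ and the Laplacian $-d^2/dt^2$ edgewise with standard vertex conditions (continuity, zero sum of outgoing derivatives at each vertex). For an eigenpair $(k^2,f)$, $k>0$: $f|_{e_j}(t)=A_j\cos(kt)+B_j\sin(kt)=C_j\cos(k(\ell_j-t))+D_j\sin(k(\ell_j-t))$, and $\mathrm{tr}_k(f)\in\mathbb{C}^{4N}$ is the vector of all $(A_j,B_j,C_j,D_j)$; for $k=0$ (constant $c$), $A_j=C_j=c$, $B_j=D_j=0$. Trace space $\mathcal{T}(\Gamma)=\{(\exp(ik\boldsymbol{\ell}),\mathrm{tr}_k(f))\}$ over all $\boldsymbol{\ell}$, eigenvalues $k^2$, and $f$ in the eigenspace (including $0$), where $\exp(ik\boldsymbol{\ell})=(e^{ik\ell_j})_j\in\mathbb{T}^N$; $\Sigma(\Gamma)$ is the projection to $\mathbb{T}^N$ and $\mathcal{T}_{\mathbf{z}}(\Gamma)=\{\mathbf{x}:(\mathbf{z},\mathbf{x})\in\mathcal{T}(\Gamma)\}$. *)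

(* Defs.v *)
From mathcomp Require Import all_boot all_order all_algebra.
From mathcomp Require Export complex.
From mathcomp Require Import all_classical all_reals all_analysis.
Import GRing.Theory Num.Theory.
Set Implicit Arguments. Unset Strict Implicit. Unset Printing Implicit Defensive.
Local Open Scope ring_scope.
Local Open Scope complex_scope.

Section Mandarin.
Variable R : realType.
Variable N : nat.

(* The mandarin graph: vertices are [false] and [true]; edge e_j (j : 'I_N)
   is oriented from vertex [orig j] to vertex [~~ orig j]. An orientation is
   therefore a map orig : 'I_N -> bool. A metric is l : 'I_N -> R with
   all l j > 0; e_j is identified with [0, l j]. *)

Definition expi (x : R) : R[i] := cos x +i* sin x.

(* For k > 0, an eigenfunction for k^2 is edgewise
   f_j(t) = A_j cos(kt) + B_j sin(kt) (complex coefficients);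
   its value and derivative: *)
Definition fval (k : R) (A B : 'I_N -> R[i]) (j : 'I_N) (t : R) : R[i] :=
  A j * (cos (k * t))%:C + B j * (sin (k * t))%:C.
Definition fder (k : R) (A B : 'I_N -> R[i]) (j : 'I_N) (t : R) : R[i] :=
  k%:C * (- A j * (sin (k * t))%:C + B j * (cos (k * t))%:C).

(* Value of f at the endpoint of e_j lying at vertex v, and the derivative of
   f at that endpoint taken in the direction pointing into the edge
   ("outgoing derivative"). *)
Definition end_val (orig : 'I_N -> bool) (l : 'I_N -> R) (k : R)
  (A B : 'I_N -> R[i]) (v : bool) (j : 'I_N) : R[i] :=
  if orig j == v then fval k A B j 0 else fval k A B j (l j).
Definition end_der (orig : 'I_N -> bool) (l : 'I_N -> R) (k : R)
  (A B : 'I_N -> R[i]) (v : bool) (j : 'I_N) : R[i] :=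
  if orig j == v then fder k A B j 0 else - fder k A B j (l j).

Definition standard_conds (orig : 'I_N -> bool) (l : 'I_N -> R) (k : R)
  (A B : 'I_N -> R[i]) : Prop :=
  forall v : bool,
    (forall i j : 'I_N, end_val orig l k A B v i = end_val orig l k A B v j) /\
    \sum_(j < N) end_der orig l k A B v j = 0.

Definition is_eigen_pos (orig : 'I_N -> bool) (l : 'I_N -> R) (k : R) : Prop :=
  0 < k /\ exists A B : 'I_N -> R[i],
    standard_conds orig l k A B /\ (exists j, A j != 0 \/ B j != 0).

(* Trace vectors in C^{4N} are stored as N x 4 matrices: row j is
   (A_j, B_j, C_j, D_j). *)
Definition iA : 'I_4 := @Ordinal 4 0 isT.
Definition iB : 'I_4 := @Ordinal 4 1 isT.
Definition iC : 'I_4 := @Ordinal 4 2 isT.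
Definition iD : 'I_4 := @Ordinal 4 3 isT.

Definition is_trace_pos (l : 'I_N -> R) (k : R) (A B : 'I_N -> R[i])
  (x : 'M[R[i]]_(N, 4)) : Prop :=
  forall j : 'I_N, x j iA = A j /\ x j iB = B j /\
    forall t : R, fval k A B j t =
      x j iC * (cos (k * (l j - t)))%:C + x j iD * (sin (k * (l j - t)))%:C.

Definition trace_space (orig : 'I_N -> bool) (z : 'I_N -> R[i])
  (x : 'M[R[i]]_(N, 4)) : Prop :=
  exists l : 'I_N -> R, (forall j, 0 < l j) /\
  exists k : R, 0 <= k /\ (forall j, z j = expi (k * l j)) /\
   ((k = 0 /\ exists c : R[i], forall j,
        x j iA = c /\ x j iB = 0 /\ x j iC = c /\ x j iD = 0)
    \/
    (is_eigen_pos orig l k /\ exists A B : 'I_N -> R[i],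
        standard_conds orig l k A B /\ is_trace_pos l k A B x)).

Definition in_Sigma (orig : 'I_N -> bool) (z : 'I_N -> R[i]) : Prop :=
  exists x, trace_space orig z x.

Definition Tz (orig : 'I_N -> bool) (z : 'I_N -> R[i]) (x : 'M[R[i]]_(N, 4)) :=
  trace_space orig z x.
Definition Tz_s (orig : 'I_N -> bool) (z : 'I_N -> R[i]) (x : 'M[R[i]]_(N, 4)) :=
  Tz orig z x /\ forall j, x j iA = x j iC /\ x j iB = x j iD.
Definition Tz_as (orig : 'I_N -> bool) (z : 'I_N -> R[i]) (x : 'M[R[i]]_(N, 4)) :=
  Tz orig z x /\ forall j, x j iA = - x j iC /\ x j iB = - x j iD.

Definition PMs (z : 'I_N -> R[i]) : R[i] :=
  \sum_(j < N) (z j - 1) * \prod_(i < N | i != j) (z i + 1).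
Definition PMas (z : 'I_N -> R[i]) : R[i] :=
  \sum_(j < N) (z j + 1) * \prod_(i < N | i != j) (z i - 1).

End Mandarin.

(* Main.v *)
Require Import Defs.
From mathcomp Require Import all_boot all_order all_algebra.
From mathcomp Require Import complex.
From mathcomp Require Import all_classical all_reals all_analysis.
From mathcomp.algebra_tactics Require Import ring.
Import Order.TTheory GRing.Theory Num.Theory.
Local Open Scope ring_scope.
Local Open Scope complex_scope.
Set Implicit Arguments. Unset Strict Implicit.

Section S.
Variable R : realType.
Variable N : nat.
Variable orig : 'I_N -> bool.

Lemma fval_id (k l0 : R) (A B : 'I_N -> R[i]) j t :
  fval k A B j t = (A j * (cos (k * l0))%:C + B j * (sin (k * l0))%:C) * (cos (k * (l0 - t)))%:C
     + (A j * (sin (k * l0))%:C - B j * (cos (k * l0))%:C) * (sin (k * (l0 - t)))%:C.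
Proof.
rewrite /fval.
have e : k * t = k * l0 - k * (l0 - t) by ring.
rewrite e cosB sinB ?rmorphD ?rmorphB ?rmorphM /=. ring.
Qed.

Lemma cf (x : R) : (cos x)%:C ^+ 2 + (sin x)%:C ^+ 2 = 1 :> R[i].
Proof. by rewrite -!rmorphXn -rmorphD cos2Dsin2. Qed.

Lemma i_neq0 : 'i != 0 :> R[i].
Proof. apply/eqP => h. have := @sqr_i R. rewrite h expr0n /= => /eqP. by rewrite eq_sym oppr_eq0 oner_eq0. Qed.

Lemma realC_neq0 (k : R) : k != 0 -> k%:C != 0 :> R[i].
Proof. move=> hk; apply/eqP => /(congr1 (@complex.Re R)) /= h. by rewrite h eqxx in hk. Qed.

Variable z : 'I_N -> R[i].

Definition cc j : R[i] := (complex.Re (z j))%:C.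
Definition sc j : R[i] := (complex.Im (z j))%:C.
Definition ev (x : 'M[R[i]]_(N,4)) v j := if orig j == v then x j iA else x j iC.
Definition kv (x : 'M[R[i]]_(N,4)) v j := if orig j == v then x j iB else x j iD.
Definition relz (x : 'M[R[i]]_(N,4)) := forall j, x j iC = x j iA * cc j + x j iB * sc j /\
   x j iD = x j iA * sc j - x j iB * cc j.
Definition Vz x := relz x /\ (forall v i j, ev x v i = ev x v j) /\
   (forall v, \sum_(j < N) kv x v j = 0).

Section KL.
Variables (l : 'I_N -> R) (k : R).
Hypothesis hk : 0 < k.
Hypothesis hz : forall j, z j = expi (k * l j).

Lemma cc_l j : cc j = (cos (k * l j))%:C. Proof. by rewrite /cc hz. Qed.
Lemma sc_l j : sc j = (sin (k * l j))%:C. Proof. by rewrite /sc hz. Qed.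

Lemma KL1 A B x : is_trace_pos l k A B x ->
  (forall j, x j iA = A j /\ x j iB = B j) /\ relz x.
Proof.
move=> h; split => j; case: (h j) => hA [hB ht]; first by [].
rewrite cc_l sc_l hA hB; split.
- have := ht (l j); rewrite (fval_id _ (l j)) subrr mulr0 cos0 sin0 rmorph0 rmorph1.
  by rewrite !mulr1 !mulr0 !addr0 => ->.
- have := ht (l j - pi / 2 / k).
  have e : k * (l j - (l j - pi / 2 / k)) = pi / 2.
    by field; exact: lt0r_neq0.
  rewrite (fval_id _ (l j)) e cos_pihalf sin_pihalf rmorph0 rmorph1.
  by rewrite !mulr1 !mulr0 !add0r => ->.
Qed.

Lemma KL2 x : relz x -> is_trace_pos l k (fun j => x j iA) (fun j => x j iB) x.
Proof.
move=> h j; split; first by []; split; first by [].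
move=> t; rewrite (fval_id _ (l j)) /= -cc_l -sc_l.
by case: (h j) => -> ->.
Qed.

Lemma KL3 x : relz x -> (standard_conds orig l k (fun j => x j iA) (fun j => x j iB) <->
   (forall v i j, ev x v i = ev x v j) /\ (forall v, \sum_(j < N) kv x v j = 0)).
Proof.
move=> h.
have ev_e v j : end_val orig l k (fun j => x j iA) (fun j => x j iB) v j = ev x v j.
  rewrite /end_val /ev /fval /=; case: ifP => _.
    by rewrite mulr0 cos0 sin0 rmorph0 rmorph1 mulr1 mulr0 addr0.
  by rewrite -cc_l -sc_l (proj1 (h j)).
have kv_e v j : end_der orig l k (fun j => x j iA) (fun j => x j iB) v j = k%:C * kv x v j.
  rewrite /end_der /kv /fder /=; case: ifP => _.
    by rewrite mulr0 cos0 sin0 rmorph0 rmorph1; ring.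
  rewrite -cc_l -sc_l (proj2 (h j)); ring.
have hk0 : k%:C != 0 :> R[i] by apply: realC_neq0; exact: lt0r_neq0.
split.
- move=> hs; split.
    by move=> v i j; rewrite -!ev_e; case: (hs v) => h1 _; apply: h1.
  move=> v; case: (hs v) => _; under eq_bigr do rewrite kv_e.
  rewrite -mulr_sumr => /eqP; rewrite mulf_eq0 (negbTE hk0) /= => /eqP //.
- case=> h1 h2 v; split.
    by move=> i j; rewrite !ev_e.
  under eq_bigr do rewrite kv_e.
  by rewrite -mulr_sumr h2 mulr0.
Qed.
End KL.

Lemma Tz_V x : Tz orig z x -> Vz x.
Proof.
case=> l [hl [k [hk0 [hz [[ek [c hc]] | [[hk _] [A [B [hs ht]]]]]]]]].
- subst k.
  have e0 j : cc j = 1 /\ sc j = 0.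
    by rewrite /cc /sc hz mul0r /expi /= cos0 sin0 rmorph1 rmorph0.
  split; [|split].
  + move=> j; case: (hc j) => [-> [-> [-> ->]]]; case: (e0 j) => -> ->.
    by split; ring.
  + move=> v i j; rewrite /ev.
    by case: (hc i) => [-> [_ [-> _]]]; case: (hc j) => [-> [_ [-> _]]]; rewrite !if_same.
  + move=> v; apply: big1 => j _; rewrite /kv.
    by case: (hc j) => [_ [-> [_ ->]]]; rewrite if_same.
- have [hAB hr] := KL1 hk hz ht.
  have eA : A = (fun j => x j iA) by apply: funext => j; rewrite (proj1 (hAB j)).
  have eB : B = (fun j => x j iB) by apply: funext => j; rewrite (proj2 (hAB j)).
  subst A B; split; first by [].
  by apply/(KL3 hk hz hr).
Qed.

Hypothesis hN : (0 < N)%N.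

Definition x1 : 'M[R[i]]_(N,4) := \matrix_(j, i) (if (i == iA) || (i == iC) then 1 else 0).

Lemma Sigma_good : in_Sigma orig z -> exists l k, 0 < k /\ (forall j, 0 < l j) /\
  (forall j, z j = expi (k * l j)) /\ is_eigen_pos orig l k.
Proof.
case=> x [l [hl [k [hk0 [hz [[ek [c hc]] | [he _]]]]]]]; last first.
  by exists l, k; split; [case: he|].
subst k.
have hT : Tz orig z x1.
  exists l; split => //; exists 0; split => //; split => //; left; split => //.
  by exists 1 => j; rewrite !mxE.
have hV := Tz_V hT.
have hk : 0 < pi *+ 2 :> R by rewrite pmulrn_lgt0 // pi_gt0.
have hz' : forall j, z j = expi (pi *+ 2 * (fun _ => 1) j).
  by move=> j; rewrite hz mul0r mulr1 /expi cos0 sin0 cos2pi sin2pi.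
exists (fun _ => 1), (pi *+ 2); split => //; split => //; split => //.
split => //; exists (fun j => x1 j iA), (fun j => x1 j iB); split.
  by apply/(KL3 hk hz' (proj1 hV)); exact: (proj2 hV).
by exists (Ordinal hN); left; rewrite mxE /= oner_eq0.
Qed.

Lemma V_Tz x : in_Sigma orig z -> Vz x -> Tz orig z x.
Proof.
move=> hS [hr hcv]; have [l [k [hk [hl [hz he]]]]] := Sigma_good hS.
exists l; split => //; exists k; split; first exact: ltW.
split => //; right; split => //.
exists (fun j => x j iA), (fun j => x j iB); split.
  by apply/(KL3 hk hz hr).
exact: KL2.
Qed.

Lemma hcs1 : in_Sigma orig z -> forall j, cc j ^+ 2 + sc j ^+ 2 = 1.
Proof.
move=> hS j; have [l [k [hk [hl [hz he]]]]] := Sigma_good hS.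
by rewrite (cc_l hz) (sc_l hz) cf.
Qed.

End S.
Section Core.
Variable R : realType.
Variable N : nat.

Lemma i_neq0' : 'i != 0 :> R[i].
Proof. apply/eqP => h. have := @sqr_i R. rewrite h expr0n /= => /eqP. by rewrite eq_sym oppr_eq0 oner_eq0. Qed.

Definition zz (c s : 'I_N -> R[i]) j := c j + 'i * s j.

Definition Qcore (c s : 'I_N -> R[i]) := exists (a : R[i]) (B : 'I_N -> R[i]),
  (a != 0 \/ exists j, B j != 0) /\ \sum_(j < N) B j = 0 /\
  forall j, a = a * c j + B j * s j /\ B j = a * s j - B j * c j.

Variables c s : 'I_N -> R[i].
Hypothesis hcs : forall j, c j ^+ 2 + s j ^+ 2 = 1.

Lemma H1 a b j : a = a * c j + b * s j -> b = a * s j - b * c j ->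
  a * (zz c s j - 1) = 'i * b * (zz c s j + 1).
Proof.
move=> h1 h2; apply/eqP; rewrite -subr_eq0; apply/eqP.
have -> : a * (zz c s j - 1) - 'i * b * (zz c s j + 1) =
   (a * c j + b * s j - a) + 'i * (a * s j - b * c j - b) - (1 + 'i ^+ 2) * b * s j.
  by rewrite /zz; ring.
by rewrite -h1 -h2 sqr_i !subrr !(mulr0, mul0r) subr0 addr0.
Qed.

Lemma Hprod (w : 'I_N -> R[i]) j :
  (w j + 1) * \prod_(i < N | i != j) (w i + 1) = \prod_(i < N) (w i + 1).
Proof. by rewrite [RHS](bigD1 j). Qed.

Lemma H2 j1 j2 : zz c s j1 + 1 = 0 -> zz c s j2 + 1 = 0 -> j1 != j2 -> PMs (zz c s) = 0.
Proof.
move=> h1 h2 hne; rewrite /PMs; apply: big1 => j _.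
case: (eqVneq j j1) => [->|hj].
  by rewrite (bigD1 j2) /= ?h2 ?mul0r ?mulr0 // eq_sym.
by rewrite (bigD1 j1) /= ?h1 ?mul0r ?mulr0 // eq_sym.
Qed.

Lemma H3 j1 : zz c s j1 + 1 = 0 ->
  PMs (zz c s) = (zz c s j1 - 1) * \prod_(i < N | i != j1) (zz c s i + 1).
Proof.
move=> h1; rewrite /PMs [LHS](bigD1 j1) //= [X in _ + X]big1 ?addr0 // => j hj.
by rewrite (bigD1 j1) /= ?h1 ?mul0r ?mulr0 // eq_sym.
Qed.

Lemma zz1 j : zz c s j + 1 = 0 -> s j = 0 /\ c j = -1.
Proof.
move=> h.
have hc : c j = (zz c s j + 1) - 1 - 'i * s j by rewrite /zz; ring.
rewrite h sub0r in hc.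
have e : c j ^+ 2 + s j ^+ 2 - 1 = 2%:R * 'i * s j + ('i ^+ 2 + 1) * s j ^+ 2.
  by rewrite hc; ring.
rewrite hcs sqr_i addNr mul0r addr0 subrr in e.
have hs : s j = 0.
  move/eqP: e; rewrite eq_sym !mulf_eq0 pnatr_eq0 /= (negbTE i_neq0') /=.
  by move/eqP.
by split => //; rewrite hc hs mulr0 subr0.
Qed.

Lemma c1 j : zz c s j + 1 != 0 -> 1 + c j != 0.
Proof.
move=> h; apply/eqP => h1; move/eqP: h; apply.
have hc : c j = -1 by rewrite -[c j](addKr 1) h1 addr0.
have : s j ^+ 2 = 0.
  have h0 := hcs j; rewrite hc sqrrN expr1n -[RHS]addr0 in h0; exact: addrI h0.
move/eqP; rewrite expf_eq0 /= => /eqP hs.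
by rewrite /zz hc hs mulr0 addr0 addNr.
Qed.

Lemma sum_ind (j1 : 'I_N) : \sum_(j < N) ((j == j1)%:R : R[i]) = 1.
Proof. by rewrite (bigD1 j1) //= eqxx big1 ?addr0 // => j /negbTE ->. Qed.

Lemma core : Qcore c s <-> PMs (zz c s) = 0.
Proof.
split.
- case=> a [B [hnz [hsum hrel]]].
  have key j : a * (zz c s j - 1) = 'i * B j * (zz c s j + 1).
    by case: (hrel j) => h1 h2; apply: H1.
  case: (eqVneq a 0) => ha.
  + subst a; case: hnz => [|[j1 hB1]]; first by rewrite eqxx.
    have hz j : B j != 0 -> zz c s j + 1 = 0.
      move=> hB; move: (key j); rewrite mul0r => /esym/eqP.
      by rewrite !mulf_eq0 (negbTE i_neq0') (negbTE hB) /= => /eqP.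
    case: (boolP [exists j2, (j2 != j1) && (B j2 != 0)]).
      move/existsP => [j2 /andP [hne hB2]].
      by apply: (H2 (hz _ hB1) (hz _ hB2)); rewrite eq_sym.
    move/existsPn => hn; exfalso; move/eqP: hB1; apply.
    rewrite -hsum (bigD1 j1) //= big1 ?addr0 // => j hj.
    by move: (hn j); rewrite hj /= negbK => /eqP.
  + have : a * PMs (zz c s) = 0.
      rewrite /PMs mulr_sumr (eq_bigr (fun j => 'i * B j * \prod_(i < N) (zz c s i + 1))).
        by rewrite -mulr_suml -mulr_sumr hsum mulr0 mul0r.
      by move=> j _; rewrite mulrA key -!mulrA Hprod.
    by move/eqP; rewrite mulf_eq0 (negbTE ha) /= => /eqP.
- move=> hP.
  case: (boolP [exists j, zz c s j + 1 == 0]).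
  + move/existsP => [j1 /eqP h1].
    have : \prod_(i < N | i != j1) (zz c s i + 1) = 0.
      move: hP; rewrite (H3 h1) => /eqP; rewrite mulf_eq0 => /orP [|/eqP //].
      have -> : zz c s j1 - 1 = - 2%:R by rewrite -[zz c s j1](addrK 1) h1; ring.
      by rewrite oppr_eq0 pnatr_eq0.
    move/eqP/prodf_eq0 => [j2 hne /eqP h2].
    exists 0, (fun j => (j == j1)%:R - (j == j2)%:R); split; [|split].
    * have hne' : (j1 == j2) = false by rewrite eq_sym (negbTE hne).
      by right; exists j1; rewrite eqxx hne' subr0 oner_eq0.
    * by rewrite sumrB !sum_ind subrr.
    * move=> j; case: (eqVneq j j1) => [->|hj1].
        by case: (zz1 h1) => -> ->; split; ring.
      case: (eqVneq j j2) => [->|hj2].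
        by case: (zz1 h2) => -> ->; split; ring.
      by split; ring.
  + move/existsPn => hn.
    have hnz j : zz c s j + 1 != 0 by exact: hn.
    have h1c j : 1 + c j != 0 by apply: c1.
    have hrel j : 1 = 1 * c j + s j / (1 + c j) * s j /\
                  s j / (1 + c j) = 1 * s j - s j / (1 + c j) * c j.
      have hs2 : s j ^+ 2 = (1 - c j) * (1 + c j).
        apply/eqP; rewrite -subr_eq0.
        have -> : s j ^+ 2 - (1 - c j) * (1 + c j) = c j ^+ 2 + s j ^+ 2 - 1 by ring.
        by rewrite hcs subrr.
      split; last by field; exact: h1c.
      have -> : s j / (1 + c j) * s j = s j ^+ 2 / (1 + c j) by field; exact: h1c.
      by rewrite hs2 mulfK //; ring.
    exists 1, (fun j => s j / (1 + c j)); split; first by left; exact: oner_neq0.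
    split; last exact: hrel.
    have key j : zz c s j - 1 = 'i * (s j / (1 + c j)) * (zz c s j + 1).
      by rewrite -[LHS]mul1r; case: (hrel j) => h1 h2; apply: H1.
    have hP' : PMs (zz c s) = 'i * (\sum_(j < N) s j / (1 + c j)) * \prod_(i < N) (zz c s i + 1).
      rewrite /PMs mulr_sumr mulr_suml; apply: eq_bigr => j _.
      by rewrite key -!mulrA Hprod.
    move: hP; rewrite hP' => /eqP; rewrite !mulf_eq0 (negbTE i_neq0') /=.
    case/orP => /eqP // hp0; exfalso; move/eqP: hp0; apply/negP.
    by apply/prodf_neq0 => i _.
Qed.
End Core.

Section Final.
Variable R : realType.
Variable N : nat.
Variable orig : 'I_N -> bool.
Variable z : 'I_N -> R[i].

Lemma ord4 (i : 'I_4) : [\/ i = iA, i = iB, i = iC | i = iD].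
Proof.
case: i => [[|[|[|[|m]]]] hi]; [constructor 1|constructor 2|constructor 3|constructor 4|by []];
  exact: val_inj.
Qed.

Definition mkx (a b c d : 'I_N -> R[i]) : 'M[R[i]]_(N,4) :=
  \matrix_(j, i) (if i == iA then a j else if i == iB then b j else if i == iC then c j else d j).

Lemma mkxA a b c d j : mkx a b c d j iA = a j. Proof. by rewrite mxE. Qed.
Lemma mkxB a b c d j : mkx a b c d j iB = b j. Proof. by rewrite mxE. Qed.
Lemma mkxC a b c d j : mkx a b c d j iC = c j. Proof. by rewrite mxE. Qed.
Lemma mkxD a b c d j : mkx a b c d j iD = d j. Proof. by rewrite mxE. Qed.

Lemma mx_ext (x y : 'M[R[i]]_(N,4)) :
  (forall j, x j iA = y j iA /\ x j iB = y j iB /\ x j iC = y j iC /\ x j iD = y j iD) -> x = y.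
Proof.
move=> h; apply/matrixP => j i.
by case: (h j) => [hA [hB [hC hD]]]; case: (ord4 i) => ->.
Qed.

Lemma Vz_add x y : Vz orig z x -> Vz orig z y -> Vz orig z (x + y).
Proof.
move=> [rx [cx kx]] [ry [cy ky]].
have eev v j : ev orig (x + y) v j = ev orig x v j + ev orig y v j.
  by rewrite /ev !mxE; case: ifP.
have ekv v j : kv orig (x + y) v j = kv orig x v j + kv orig y v j.
  by rewrite /kv !mxE; case: ifP.
split; [|split].
- move=> j; rewrite !mxE; case: (rx j) => -> ->; case: (ry j) => -> ->.
  by split; ring.
- by move=> v i j; rewrite !eev (cx v i j) (cy v i j).
- by move=> v; under eq_bigr do rewrite ekv; rewrite big_split /= kx ky addr0.
Qed.

Hypothesis hcs : forall j, cc z j ^+ 2 + sc z j ^+ 2 = 1.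

Lemma rel_inv x j : relz z x -> x j iA = x j iC * cc z j + x j iD * sc z j /\
   x j iB = x j iC * sc z j - x j iD * cc z j.
Proof.
move=> h; case: (h j) => -> ->; split.
  have -> : (x j iA * cc z j + x j iB * sc z j) * cc z j + (x j iA * sc z j - x j iB * cc z j) * sc z j
     = x j iA * (cc z j ^+ 2 + sc z j ^+ 2) by ring.
  by rewrite hcs mulr1.
have -> : (x j iA * cc z j + x j iB * sc z j) * sc z j - (x j iA * sc z j - x j iB * cc z j) * cc z j
     = x j iB * (cc z j ^+ 2 + sc z j ^+ 2) by ring.
by rewrite hcs mulr1.
Qed.

Definition xs (x : 'M[R[i]]_(N,4)) :=
  mkx (fun j => (x j iA + x j iC) / 2%:R) (fun j => (x j iB + x j iD) / 2%:R)
      (fun j => (x j iA + x j iC) / 2%:R) (fun j => (x j iB + x j iD) / 2%:R).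
Definition xa (x : 'M[R[i]]_(N,4)) :=
  mkx (fun j => (x j iA - x j iC) / 2%:R) (fun j => (x j iB - x j iD) / 2%:R)
      (fun j => (x j iC - x j iA) / 2%:R) (fun j => (x j iD - x j iB) / 2%:R).

Lemma two_neq0 : (2%:R : R[i]) != 0. Proof. by rewrite pnatr_eq0. Qed.

Lemma x_split x : x = xs x + xa x.
Proof.
apply: mx_ext => j; rewrite !mxE /=.
have h2 := two_neq0.
by split; [|split; [|split]]; field.
Qed.

Lemma Vz_xs x : Vz orig z x -> Vz orig z (xs x).
Proof.
move=> [rx [cx kx]]; split; [|split].
- move=> j; rewrite /xs !mkxA !mkxB !mkxC !mkxD.
  have [hC hD] := rx j; have [hA hB] := rel_inv j rx.
  set A := x j iA in hC hD hA hB *; set B := x j iB in hC hD hA hB *.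
  set C := x j iC in hC hD hA hB *; set D := x j iD in hC hD hA hB *.
  split.
    have -> : (A + C) / 2%:R * cc z j + (B + D) / 2%:R * sc z j =
      ((C * cc z j + D * sc z j) + (A * cc z j + B * sc z j)) / 2%:R by ring.
    by rewrite -hA -hC.
  have -> : (A + C) / 2%:R * sc z j - (B + D) / 2%:R * cc z j =
      ((C * sc z j - D * cc z j) + (A * sc z j - B * cc z j)) / 2%:R by ring.
  by rewrite -hB -hD.
- have e v j : ev orig (xs x) v j = (ev orig x v j + ev orig x (~~ v) j) / 2%:R.
    rewrite /ev /xs !mkxA !mkxC; case: (orig j); case: v => //=; by rewrite addrC.
  by move=> v i j; rewrite !e (cx v i j) (cx (~~ v) i j).
- have e v j : kv orig (xs x) v j = (kv orig x v j + kv orig x (~~ v) j) / 2%:R.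
    rewrite /kv /xs !mkxB !mkxD; case: (orig j); case: v => //=; by rewrite addrC.
  move=> v; under eq_bigr do rewrite e.
  by rewrite -mulr_suml big_split /= !kx addr0 mul0r.
Qed.

Lemma Vz_xa x : Vz orig z x -> Vz orig z (xa x).
Proof.
move=> [rx [cx kx]]; split; [|split].
- move=> j; rewrite /xa !mkxA !mkxB !mkxC !mkxD.
  have [hC hD] := rx j; have [hA hB] := rel_inv j rx.
  set A := x j iA in hC hD hA hB *; set B := x j iB in hC hD hA hB *.
  set C := x j iC in hC hD hA hB *; set D := x j iD in hC hD hA hB *.
  split.
    have -> : (A - C) / 2%:R * cc z j + (B - D) / 2%:R * sc z j =
      ((A * cc z j + B * sc z j) - (C * cc z j + D * sc z j)) / 2%:R by ring.
    by rewrite -hA -hC.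
  have -> : (A - C) / 2%:R * sc z j - (B - D) / 2%:R * cc z j =
      ((A * sc z j - B * cc z j) - (C * sc z j - D * cc z j)) / 2%:R by ring.
  by rewrite -hB -hD.
- have e v j : ev orig (xa x) v j = (ev orig x v j - ev orig x (~~ v) j) / 2%:R.
    by rewrite /ev /xa !mkxA !mkxC; case: (orig j); case: v.
  by move=> v i j; rewrite !e (cx v i j) (cx (~~ v) i j).
- have e v j : kv orig (xa x) v j = (kv orig x v j - kv orig x (~~ v) j) / 2%:R.
    by rewrite /kv /xa !mkxB !mkxD; case: (orig j); case: v.
  move=> v; under eq_bigr do rewrite e.
  by rewrite -mulr_suml sumrB /= !kx subrr mul0r.
Qed.

End Final.

Section Final2.
Variable R : realType.
Variable N : nat.
Variable orig : 'I_N -> bool.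
Variable z : 'I_N -> R[i].
Hypothesis hN : (0 < N)%N.
Hypothesis hS : in_Sigma orig z.

Lemma zE : zz (cc z) (sc z) = z.
Proof. by apply: funext => j; rewrite /zz /cc /sc -complexE. Qed.

Lemma mx0E j i : (0 : 'M[R[i]]_(N,4)) j i = 0.
Proof. by rewrite mxE. Qed.

Lemma sym_iff : (exists x, Tz_s orig z x /\ x <> 0) <-> Qcore (cc z) (sc z).
Proof.
pose j0 := Ordinal hN.
split.
- move=> [x [[hT hsym] hx0]]; have [rx [cx kx]] := Tz_V hT.
  pose a := x j0 iA.
  have hA j : x j iA = a.
    by move: (cx true j j0); rewrite /ev -(proj1 (hsym j)) -(proj1 (hsym j0)) !if_same.
  exists a, (fun j => x j iB); split; [|split].
  + case: (eqVneq a 0) => ha; last by left.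
    right; case: (boolP [exists j, x j iB != 0]) => [/existsP [j hj]|/existsPn hn]; first by exists j.
    exfalso; apply: hx0; apply: mx_ext => j; rewrite !mx0E.
    have hB : x j iB = 0 by move: (hn j); rewrite negbK => /eqP.
    by rewrite -(proj1 (hsym j)) -(proj2 (hsym j)) hA ha hB.
  + move: (kx true); under eq_bigr => j _ do rewrite /kv -(proj2 (hsym j)) if_same.
    by [].
  + move=> j; case: (rx j) => hC hD.
    by rewrite -(proj1 (hsym j)) -(proj2 (hsym j)) !hA in hC hD.
- move=> [a [B [hnz [hsum hrel]]]].
  exists (mkx (fun=> a) B (fun=> a) B); split; [split|].
  + apply: V_Tz => //; split; [|split].
    * by move=> j; rewrite !mkxA !mkxB !mkxC !mkxD; exact: hrel.
    * by move=> v i j; rewrite /ev !mkxA !mkxC !if_same.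
    * by move=> v; under eq_bigr do rewrite /kv mkxB mkxD if_same.
  + by move=> j; rewrite mkxA mkxC mkxB mkxD.
  + move=> h0; case: hnz => [ha|[j hj]].
      by move: ha; have := congr1 (fun m : 'M[R[i]]_(N,4) => m j0 iA) h0; rewrite /= mkxA mx0E => ->; rewrite eqxx.
    by move: hj; have := congr1 (fun m : 'M[R[i]]_(N,4) => m j iB) h0; rewrite /= mkxB mx0E => ->; rewrite eqxx.
Qed.

Definition eps j : R[i] := if orig j then 1 else -1.

Lemma eps_eq0 j y : eps j * y = 0 -> y = 0.
Proof. by rewrite /eps; case: (orig j); rewrite ?mul1r ?mulN1r // => /eqP; rewrite oppr_eq0 => /eqP. Qed.

Lemma as_iff : (exists x, Tz_as orig z x /\ x <> 0) <->
   Qcore (fun j => - cc z j) (fun j => - sc z j).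
Proof.
pose j0 := Ordinal hN.
split.
- move=> [x [[hT has] hx0]]; have [rx [cx kx]] := Tz_V hT.
  have hCA j : x j iC = - x j iA by rewrite (proj1 (has j)) opprK.
  have hDB j : x j iD = - x j iB by rewrite (proj2 (has j)) opprK.
  have hev j : ev orig x true j = eps j * x j iA.
    by rewrite /ev /eps; case: (orig j) => /=; rewrite ?mul1r ?mulN1r ?hCA.
  have hkv j : kv orig x true j = eps j * x j iB.
    by rewrite /kv /eps; case: (orig j) => /=; rewrite ?mul1r ?mulN1r ?hDB.
  pose a := eps j0 * x j0 iA.
  have hA j : eps j * x j iA = a by rewrite /a -!hev; apply: cx.
  exists a, (fun j => eps j * x j iB); split; [|split].
  + case: (eqVneq a 0) => ha; last by left.
    right; case: (boolP [exists j, eps j * x j iB != 0]) => [/existsP [j hj]|/existsPn hn]; first by exists j.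
    exfalso; apply: hx0; apply: mx_ext => j; rewrite !mx0E.
    have hB : x j iB = 0 by move: (hn j); rewrite negbK => /eqP; apply: eps_eq0.
    have hA0 : x j iA = 0 by apply: (@eps_eq0 j); rewrite hA.
    by rewrite hCA hDB hA0 hB oppr0.
  + transitivity (\sum_(j < N) kv orig x true j); last exact: kx.
    by apply: eq_bigr => j _; rewrite hkv.
  + move=> j /=; case: (rx j) => hC hD; rewrite -(hA j); split.
      transitivity (- (eps j * (x j iA * cc z j + x j iB * sc z j))); last by ring.
      by rewrite -hC (proj1 (has j)); ring.
    transitivity (- (eps j * (x j iA * sc z j - x j iB * cc z j))); last by ring.
    by rewrite -hD (proj2 (has j)); ring.
- move=> [a [B [hnz [hsum hrel]]]].
  exists (mkx (fun j => eps j * a) (fun j => eps j * B j)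
              (fun j => - (eps j * a)) (fun j => - (eps j * B j))); split; [split|].
  + apply: V_Tz => //; split; [|split].
    * move=> j; rewrite !mkxA !mkxB !mkxC !mkxD; have [h1 h2] := hrel j; simpl in h1, h2.
      split.
        transitivity (- (eps j * (a * - cc z j + B j * - sc z j))); first by rewrite -h1.
        by ring.
      transitivity (- (eps j * (a * - sc z j - B j * - cc z j))); first by rewrite -h2.
      by ring.
    * have e v j : ev orig (mkx (fun j => eps j * a) (fun j => eps j * B j)
              (fun j => - (eps j * a)) (fun j => - (eps j * B j))) v j = if v then a else - a.
        by rewrite /ev /eps mkxA mkxC; case: (orig j); case: v => /=; ring.
      by move=> v i j; rewrite !e.
    * move=> v.
      have e j : kv orig (mkx (fun j => eps j * a) (fun j => eps j * B j)
              (fun j => - (eps j * a)) (fun j => - (eps j * B j))) v j = if v then B j else - B j.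
        by rewrite /kv /eps mkxB mkxD; case: (orig j); case: v => /=; ring.
      under eq_bigr do rewrite e.
      clear e; by case: v; rewrite ?sumrN hsum ?oppr0.
  + by move=> j; rewrite mkxA mkxC mkxB mkxD !opprK.
  + move=> h0; case: hnz => [ha|[j hj]].
      move: ha; have := congr1 (fun m : 'M[R[i]]_(N,4) => m j0 iA) h0; rewrite /= mkxA mx0E => /eps_eq0 ->.
      by rewrite eqxx.
    by move: hj; have := congr1 (fun m : 'M[R[i]]_(N,4) => m j iB) h0; rewrite /= mkxB mx0E => /eps_eq0 ->; rewrite eqxx.
Qed.

End Final2.

Lemma PMs_neg (R : realType) N (w : 'I_N -> R[i]) :
  PMs (fun j => - w j) = - (-1) ^+ N.-1 * PMas w.
Proof.
rewrite /PMs /PMas mulr_sumr; apply: eq_bigr => j _.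
have hp : \prod_(i < N | i != j) (- w i + 1) = (-1) ^+ N.-1 * \prod_(i < N | i != j) (w i - 1).
  have := prodrN (predC1 j) (fun i => w i - 1).
  rewrite cardC1 card_ord => <-.
  by apply: eq_big => [//|i _]; rewrite opprB addrC.
rewrite hp; ring.
Qed.

Lemma self_neg (R : realType) (y : R[i]) : y = - y -> y = 0.
Proof.
move=> h; have : y *+ 2 == 0 by rewrite mulr2n {1}h addNr.
by rewrite mulrn_eq0 /= => /eqP.
Qed.

Unset Implicit Arguments. Set Strict Implicit.

Theorem mainTheorem12 (R : realType) (N : nat) (orig : 'I_N -> bool)
  (z : 'I_N -> R[i]) :
  (0 < N)%N -> in_Sigma orig z ->
  ((forall x : 'M[R[i]]_(N, 4),
      Tz orig z x <->
      exists xs xa, Tz_s orig z xs /\ Tz_as orig z xa /\ x = xs + xa) /\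
   (forall x : 'M[R[i]]_(N, 4), Tz_s orig z x -> Tz_as orig z x -> x = 0)) /\
  ((exists x, Tz_s orig z x /\ x <> 0) <-> PMs z = 0) /\
  ((exists x, Tz_as orig z x /\ x <> 0) <-> PMas z = 0).
Proof.
move=> hN hS.
have hcs := hcs1 hN hS.
split; [split|split].
- move=> x; split.
  + move=> hT; have hV := Tz_V hT.
    exists (xs x), (xa x); split; [split|split; [split|]].
    * have h1 := Vz_xs hcs hV. have h2 := V_Tz hN hS h1. exact: h2.
    * by move=> j; rewrite /xs !mkxA !mkxB !mkxC !mkxD.
    * have h1 := Vz_xa hcs hV. have h2 := V_Tz hN hS h1. exact: h2.
    * by move=> j; rewrite /xa !mkxA !mkxB !mkxC !mkxD; split; ring.
    * exact: x_split.
  + move=> [y1 [y2 [[hT1 _] [[hT2 _] ->]]]].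
    have h1 := Vz_add (Tz_V hT1) (Tz_V hT2). have h2 := V_Tz hN hS h1. exact: h2.
- move=> x [_ hs] [_ ha]; apply: mx_ext => j; rewrite !mx0E.
  have hC : x j iC = 0 by apply: self_neg; rewrite -{1}(proj1 (hs j)) (proj1 (ha j)).
  have hD : x j iD = 0 by apply: self_neg; rewrite -{1}(proj2 (hs j)) (proj2 (ha j)).
  by rewrite (proj1 (hs j)) (proj2 (hs j)) hC hD.
- rewrite (sym_iff hN hS).
  have -> : PMs z = PMs (zz (cc z) (sc z)) by rewrite zE.
  exact: (core hcs).
- rewrite (as_iff hN hS).
  have hcs' : forall j, (fun j => - cc z j) j ^+ 2 + (fun j => - sc z j) j ^+ 2 = 1.
    by move=> j /=; rewrite !sqrrN.
  rewrite (core hcs').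
  have e : zz (fun j => - cc z j) (fun j => - sc z j) = (fun j => - z j).
    apply: funext => j; rewrite /zz /= [in RHS](complexE (z j)) /cc /sc opprD mulrN.
    done.
  rewrite e PMs_neg; split.
    by move/eqP; rewrite mulf_eq0 oppr_eq0 signr_eq0 /= => /eqP.
  by move=> ->; rewrite mulr0.
Qed.
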